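(* Every non-empty partial metric space $(X,p_X)$ has at least two p-Cauchy completions that are not isometric; that is, there are p-Cauchy completions $(\bar X,i)$ and $(\tilde X,j)$ of $X$ for which there is no bijective isometry $g\colon\bar X\to\tilde X$ with $g\circ i=j$.
   Context: A partial metric on a set $X$ is a function $p_X\colon X\times X\to\mathbb{R}_{\geq0}$ such that for all $x,y,z\in X$: (P1) $p_X(x,x)=p_X(x,y)=p_X(y,y)$ implies $x=y$; (P2) $p_X(x,x)\leq p_X(x,y)$; (P3) $p_X(x,y)=p_X(y,x)$; (P4) $p_X(x,z)+p_X(y,y)\leq p_X(x,y)+p_X(y,z)$. For $x\in X$ and $\varepsilon>0$, $B_\varepsilon(x)=\{y\in X: p_X(x,y)<p_X(x,x)+\varepsilon\}$. A subset $A\subseteq X$ is dense in $X$ if for every $x\in X$ and $\varepsilon>0$ there is $y\in A$ with $y\in B_\varepsilon(x)$. A sequence $(x_n)$ in $X$ p-converges to $x\in X$ if $p_X(x,x)=\lim_{n}p_X(x,x_n)=\lim_{n}p_X(x_n,x_n)$; it is p-Cauchy if $\lim_{n,m\to\infty}p_X(x_n,x_m)$ exists and is finite. $X$ is p-Cauchy complete if every p-Cauchy sequence p-converges. An isometric embedding (isometry) $i\colon X\to Y$ is a map with $p_Y(i(x),i(y))=p_X(x,y)$ for all $x,y$. A p-Cauchy completion of $X$ is a pair $(\bar X,i)$ where $\bar X$ is a p-Cauchy complete partial metric space and $i\colon X\to\bar X$ is an isometric embedding with $i(X)$ dense in $\bar X$. *)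

(* Defs.v *)
From Stdlib Require Export Reals.
Open Scope R_scope.

Section PM.
Context {X : Type}.

Definition is_partial_metric (p : X -> X -> R) : Prop :=
  (forall x y, 0 <= p x y) /\
  (forall x y, p x x = p x y -> p x y = p y y -> x = y) /\
  (forall x y, p x x <= p x y) /\
  (forall x y, p x y = p y x) /\
  (forall x y z, p x z + p y y <= p x y + p y z).

Definition pball (p : X -> X -> R) (x : X) (eps : R) (y : X) : Prop :=
  p x y < p x x + eps.

Definition pdense (p : X -> X -> R) (A : X -> Prop) : Prop :=
  forall x eps, 0 < eps -> exists y, A y /\ pball p x eps y.

Definition p_converges (p : X -> X -> R) (u : nat -> X) (x : X) : Prop :=
  Un_cv (fun n => p x (u n)) (p x x) /\ Un_cv (fun n => p (u n) (u n)) (p x x).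

Definition p_Cauchy (p : X -> X -> R) (u : nat -> X) : Prop :=
  exists a : R, forall eps, 0 < eps ->
    exists N : nat, forall n m, (N <= n)%nat -> (N <= m)%nat ->
      Rabs (p (u n) (u m) - a) < eps.

Definition p_Cauchy_complete (p : X -> X -> R) : Prop :=
  forall u, p_Cauchy p u -> exists x, p_converges p u x.
End PM.

Definition isometry {X Y : Type} (pX : X -> X -> R) (pY : Y -> Y -> R)
  (f : X -> Y) : Prop := forall x y, pY (f x) (f y) = pX x y.

Definition bijective_map {X Y : Type} (f : X -> Y) : Prop :=
  (forall x y, f x = f y -> x = y) /\ (forall y, exists x, f x = y).

Definition is_pCauchy_completion {X Y : Type} (pX : X -> X -> R)
  (pY : Y -> Y -> R) (i : X -> Y) : Prop :=
  is_partial_metric pY /\ p_Cauchy_complete pY /\ isometry pX pY i /\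
  pdense pY (fun y => exists x, i x = y).

(* Main.v *)
Require Import Defs.
From Stdlib Require Import Reals Lra Lia Classical ClassicalEpsilon ProofIrrelevance FunctionalExtensionality PropExtensionality.
Open Scope R_scope.

Lemma Rabs_le_e x a : Rabs x <= a -> -a <= x <= a.
Proof. unfold Rabs; destruct (Rcase_abs x); lra. Qed.
Lemma Rabs_lt_e x a : Rabs x < a -> -a < x < a.
Proof. unfold Rabs; destruct (Rcase_abs x); lra. Qed.

Ltac unabs := repeat match goal with
  | H : Rabs _ < _ |- _ => apply Rabs_lt_e in H
  | H : Rabs _ <= _ |- _ => apply Rabs_le_e in H
  | |- Rabs _ < _ => apply Rabs_def1
  | |- Rabs _ <= _ => apply Rabs_le; split
  end.

Lemma lim_le2 (f g : nat -> R) l m c :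
  Un_cv f l -> Un_cv g m -> (exists N, forall n, (N <= n)%nat -> f n <= g n + c) -> l <= m + c.
Proof.
  intros Hf Hg [N HN]. destruct (Rle_or_lt l (m + c)) as [H|H]; auto.
  destruct (Hf ((l - m - c)/2)) as [M1 HM1]; [lra|].
  destruct (Hg ((l - m - c)/2)) as [M2 HM2]; [lra|].
  set (n := max N (max M1 M2)).
  specialize (HM1 n ltac:(unfold n; lia)). specialize (HM2 n ltac:(unfold n; lia)).
  specialize (HN n ltac:(unfold n; lia)). unfold Rdist, R_dist in *. unabs. lra.
Qed.

Lemma cv_const c : Un_cv (fun _ => c) c.
Proof. intros e He. exists 0%nat. intros. unfold Rdist, R_dist. rewrite Rminus_diag, Rabs_R0. lra. Qed.

Lemma lim_le_c (f : nat -> R) l c :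
  Un_cv f l -> (exists N, forall n, (N <= n)%nat -> f n <= c) -> l <= c.
Proof. intros Hf [N HN]. rewrite <- (Rplus_0_r c). apply (lim_le2 f (fun _ => c)); auto using cv_const.
  exists N. intros. specialize (HN n H). lra. Qed.

Lemma lim_ge_c (f : nat -> R) l c :
  Un_cv f l -> (exists N, forall n, (N <= n)%nat -> c <= f n) -> c <= l.
Proof. intros Hf [N HN]. rewrite <- (Rplus_0_r l). apply (lim_le2 (fun _ => c) f); auto using cv_const.
  exists N. intros. specialize (HN n H). lra. Qed.

Lemma lim_close (f : nat -> R) l c e :
  Un_cv f l -> (exists N, forall n, (N <= n)%nat -> Rabs (f n - c) <= e) -> Rabs (l - c) <= e.
Proof. intros Hf [N HN]. 
  assert (l <= c + e). { apply (lim_le_c f); auto. exists N. intros n Hn. specialize (HN n Hn). unabs. lra. }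
  assert (c - e <= l). { apply (lim_ge_c f); auto. exists N. intros n Hn. specialize (HN n Hn). unabs. lra. }
  unabs; lra. Qed.

Lemma cv_ev (f g : nat -> R) l : (exists N, forall n, (N <= n)%nat -> f n = g n) -> Un_cv f l -> Un_cv g l.
Proof. intros [N HN] Hf e He. destruct (Hf e He) as [M HM]. exists (max N M). intros n Hn.
  rewrite <- HN by lia. apply HM. lia. Qed.

Lemma eq_of_close x a : (forall e, 0 < e -> Rabs (x - a) < e) -> x = a.
Proof. intros H. destruct (Req_dec x a) as [|Hne]; auto.
  assert (0 < Rabs (x - a)) by (apply Rabs_pos_lt; lra).
  specialize (H _ H0). lra. Qed.

Lemma small_d e : 0 < e -> exists K, forall k, (K <= k)%nat -> / (INR k + 1) < e.
Proof. intros He. destruct (INR_archimed e 1 He) as [K HK]. exists K. intros k Hk.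
  assert (INR K <= INR k) by (apply le_INR; auto).
  assert (0 <= INR K) by apply pos_INR.
  apply (Rmult_lt_reg_l (INR k + 1)); [lra|]. rewrite Rinv_r by lra. nra. Qed.
Section Compl.
Context {X : Type} (p : X -> X -> R) (Hp : is_partial_metric p).

Lemma pm_nn x y : 0 <= p x y. Proof. apply Hp. Qed.
Lemma pm_p1 x y : p x x = p x y -> p x y = p y y -> x = y. Proof. apply Hp. Qed.
Lemma pm_p2 x y : p x x <= p x y. Proof. apply Hp. Qed.
Lemma pm_sym x y : p x y = p y x. Proof. apply Hp. Qed.
Lemma pm_p4 x y z : p x z + p y y <= p x y + p y z. Proof. apply Hp. Qed.

Definition Cau (u : nat -> X) := p_Cauchy p u.

Lemma pair_cauchy u v : Cau u -> Cau v -> Cauchy_crit (fun n => p (u n) (v n)).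
Proof.
  intros [a Ha] [b Hb] eps He.
  destruct (Ha (eps/4)) as [N1 H1]; [lra|]. destruct (Hb (eps/4)) as [N2 H2]; [lra|].
  exists (max N1 N2). intros n m Hn Hm. unfold Rdist, R_dist.
  pose proof (H1 n m ltac:(lia) ltac:(lia)). pose proof (H1 m m ltac:(lia) ltac:(lia)).
  pose proof (H1 m n ltac:(lia) ltac:(lia)). pose proof (H1 n n ltac:(lia) ltac:(lia)).
  pose proof (H2 n m ltac:(lia) ltac:(lia)). pose proof (H2 m m ltac:(lia) ltac:(lia)).
  pose proof (H2 m n ltac:(lia) ltac:(lia)). pose proof (H2 n n ltac:(lia) ltac:(lia)).
  pose proof (pm_p4 (u n) (u m) (v n)). pose proof (pm_p4 (u m) (v m) (v n)).
  pose proof (pm_p4 (u m) (u n) (v m)). pose proof (pm_p4 (u n) (v n) (v m)).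
  pose proof (pm_sym (v m) (v n)).
  unabs; lra.
Qed.

Definition L (u v : nat -> X) : R :=
  epsilon (inhabits 0) (fun l => Un_cv (fun n => p (u n) (v n)) l).

Lemma L_spec u v : Cau u -> Cau v -> Un_cv (fun n => p (u n) (v n)) (L u v).
Proof. intros Hu Hv. unfold L. apply epsilon_spec.
  destruct (R_complete _ (pair_cauchy u v Hu Hv)) as [l Hl]. eauto. Qed.

Lemma L_unique u v l : Cau u -> Cau v -> Un_cv (fun n => p (u n) (v n)) l -> L u v = l.
Proof. intros Hu Hv H. eapply UL_sequence; [apply L_spec|]; eauto. Qed.

Lemma L_sym u v : Cau u -> Cau v -> L u v = L v u.
Proof. intros Hu Hv. apply L_unique; auto.
  eapply cv_ev; [|apply (L_spec v u Hv Hu)]. exists 0%nat. intros. apply pm_sym. Qed.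

Lemma L_nn u v : Cau u -> Cau v -> 0 <= L u v.
Proof. intros Hu Hv. apply (lim_ge_c _ _ _ (L_spec u v Hu Hv)). exists 0%nat. intros; apply pm_nn. Qed.

Lemma L_p2 u v : Cau u -> Cau v -> L u u <= L u v.
Proof. intros Hu Hv. rewrite <- (Rplus_0_r (L u v)).
  apply (lim_le2 _ _ _ _ _ (L_spec u u Hu Hu) (L_spec u v Hu Hv)). exists 0%nat. intros.
  pose proof (pm_p2 (u n) (v n)); lra. Qed.

Lemma L_p4 u v w : Cau u -> Cau v -> Cau w -> L u w + L v v <= L u v + L v w.
Proof. intros Hu Hv Hw. rewrite <- (Rplus_0_r (L u v + L v w)).
  apply (lim_le2 _ _ _ _ _ (CV_plus _ _ _ _ (L_spec u w Hu Hw) (L_spec v v Hv Hv))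
                 (CV_plus _ _ _ _ (L_spec u v Hu Hv) (L_spec v w Hv Hw))).
  exists 0%nat. intros. pose proof (pm_p4 (u n) (v n) (w n)). lra. Qed.

Lemma Cau_const x : Cau (fun _ => x).
Proof. exists (p x x). intros. exists 0%nat. intros. rewrite Rminus_diag, Rabs_R0; lra. Qed.

Lemma L_const x y : L (fun _ => x) (fun _ => y) = p x y.
Proof. apply L_unique; auto using Cau_const, cv_const. Qed.

Lemma L_self u a : (forall eps, 0 < eps -> exists N : nat, forall n m, (N <= n)%nat -> (N <= m)%nat ->
      Rabs (p (u n) (u m) - a) < eps) -> L u u = a.
Proof. intros H. assert (Hu : Cau u) by (exists a; auto). apply L_unique; auto.
  intros e He. destruct (H e He) as [N HN]. exists N. intros n Hn. apply HN; lia. Qed.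

Definition eqv u v := L u u = L u v /\ L u v = L v v.

Lemma L_resp u u' v : Cau u -> Cau u' -> Cau v -> eqv u u' -> L u v = L u' v.
Proof. intros Hu Hu' Hv [E1 E2].
  pose proof (L_p4 u u' v Hu Hu' Hv). pose proof (L_p4 u' u v Hu' Hu Hv).
  pose proof (L_sym u u' Hu Hu'). lra. Qed.

Lemma eqv_sym u v : Cau u -> Cau v -> eqv u v -> eqv v u.
Proof. intros Hu Hv [E1 E2]. pose proof (L_sym u v Hu Hv). split; lra. Qed.

Lemma eqv_trans u v w : Cau u -> Cau v -> Cau w -> eqv u v -> eqv v w -> eqv u w.
Proof. intros Hu Hv Hw E1 E2.
  pose proof (L_resp v u w Hv Hu Hw (eqv_sym _ _ Hu Hv E1)).
  destruct E1, E2. split; lra. Qed.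

Definition cls u := fun v => Cau v /\ eqv u v.

Lemma cls_eq u v : Cau u -> Cau v -> eqv u v -> cls u = cls v.
Proof. intros Hu Hv E. apply functional_extensionality. intros w.
  apply propositional_extensionality. unfold cls. split; intros [Hw E'].
  - split; auto. apply (eqv_trans v u w); auto. apply eqv_sym; auto.
  - split; auto. apply (eqv_trans u v w); auto. Qed.

Definition Y := {S : (nat -> X) -> Prop | exists u, Cau u /\ S = cls u}.

Definition rep (S : Y) : nat -> X := proj1_sig (constructive_indefinite_description _ (proj2_sig S)).

Lemma rep_spec S : Cau (rep S) /\ proj1_sig S = cls (rep S).
Proof. unfold rep. destruct (constructive_indefinite_description _ _) as [u Hu]. exact Hu. Qed.

Lemma rep_Cau S : Cau (rep S). Proof. apply rep_spec. Qed.

Definition mk u (H : Cau u) : Y := exist _ (cls u) (ex_intro _ u (conj H eq_refl)).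

Lemma Y_eq (S T : Y) : proj1_sig S = proj1_sig T -> S = T.
Proof. destruct S as [s Hs], T as [t Ht]; simpl. intros ->. f_equal. apply proof_irrelevance. Qed.

Lemma rep_mk u H : eqv u (rep (mk u H)).
Proof. destruct (rep_spec (mk u H)) as [Hr E]. simpl in E.
  assert (cls (rep (mk u H)) (rep (mk u H))) by (split; auto; split; auto).
  rewrite <- E in H0. apply H0. Qed.

Definition pY (S T : Y) := L (rep S) (rep T).

Lemma pY_mk_l u H T : pY (mk u H) T = L u (rep T).
Proof. unfold pY. symmetry. apply L_resp; auto using rep_Cau, rep_mk. Qed.

Lemma pY_mk_r S u H : pY S (mk u H) = L (rep S) u.
Proof. unfold pY. rewrite (L_sym _ _ (rep_Cau S) (rep_Cau _)).
  rewrite (L_sym _ u (rep_Cau S) H). symmetry. apply L_resp; auto using rep_Cau, rep_mk. Qed.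

Lemma L_rep_mk u v H : Cau u -> L u (rep (mk v H)) = L u v.
Proof. intros Hu. rewrite (L_sym u _ Hu (rep_Cau _)), (L_sym u v Hu H).
  symmetry. apply L_resp; auto using rep_Cau, rep_mk. Qed.

Lemma pY_pm : is_partial_metric pY.
Proof.
  unfold pY. repeat split.
  - intros. apply L_nn; apply rep_Cau.
  - intros S T E1 E2. apply Y_eq. rewrite (proj2 (rep_spec S)), (proj2 (rep_spec T)).
    apply cls_eq; auto using rep_Cau. split; auto.
  - intros. apply L_p2; apply rep_Cau.
  - intros. apply L_sym; apply rep_Cau.
  - intros. apply L_p4; apply rep_Cau.
Qed.

Definition iX x : Y := mk (fun _ => x) (Cau_const x).

Lemma iX_iso : isometry p pY iX.
Proof. intros x y. unfold iX. rewrite pY_mk_l, L_rep_mk by apply Cau_const. apply L_const. Qed.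

Lemma pY_iX S x : pY S (iX x) = L (rep S) (fun _ => x).
Proof. apply pY_mk_r. Qed.

Lemma iX_dense : pdense pY (fun y => exists x, iX x = y).
Proof.
  intros S eps He. destruct (rep_Cau S) as [a Ha].
  pose proof (L_self _ _ Ha) as Ea.
  destruct (Ha (eps/2)) as [N HN]; [lra|].
  exists (iX (rep S N)). split; eauto. unfold pball.
  rewrite pY_iX. unfold pY. rewrite Ea.
  assert (L (rep S) (fun _ => rep S N) <= a + eps/2); [|lra].
  apply (lim_le_c _ _ _ (L_spec _ _ (rep_Cau S) (Cau_const _))).
  exists N. intros n Hn. specialize (HN n N Hn (le_n _)). unabs. lra.
Qed.


Lemma diag (U : nat -> nat -> X) a : (forall k, Cau (U k)) ->
  (forall eps, 0 < eps -> exists N : nat, forall k l, (N <= k)%nat -> (N <= l)%nat ->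
      Rabs (L (U k) (U l) - a) < eps) ->
  exists v, Cau v /\ L v v = a /\ Un_cv (fun k => L v (U k)) a.
Proof.
  intros HU Ha.
  assert (Hd : forall k, 0 < / (INR k + 1)).
  { intros k. apply Rinv_0_lt_compat. pose proof (pos_INR k). lra. }
  assert (HN : forall k, exists N, forall n m, (N<=n)%nat -> (N<=m)%nat ->
     Rabs (p (U k n) (U k m) - L (U k) (U k)) < / (INR k + 1)).
  { intros k. destruct (HU k) as [b Hb]. rewrite (L_self _ _ Hb). apply Hb, Hd. }
  pose (N := fun k => epsilon (inhabits 0%nat) (fun N => forall n m, (N<=n)%nat -> (N<=m)%nat ->
     Rabs (p (U k n) (U k m) - L (U k) (U k)) < / (INR k + 1))).
  assert (HNs : forall k n m, (N k <= n)%nat -> (N k <= m)%nat ->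
     Rabs (p (U k n) (U k m) - L (U k) (U k)) < / (INR k + 1)).
  { intros k. unfold N. exact (epsilon_spec (inhabits 0%nat) _ (HN k)). }
  clearbody N.
  pose (v := fun k => U k (N k)).
  assert (B1 : forall k n, (N k <= n)%nat ->
     p (v k) (U k n) - p (U k n) (U k n) < 2 * / (INR k + 1) /\
     p (U k n) (v k) - p (v k) (v k) < 2 * / (INR k + 1)).
  { intros k n H. unfold v. pose proof (HNs k n (N k) H (le_n _)).
    pose proof (HNs k n n H H). pose proof (HNs k (N k) (N k) (le_n _) (le_n _)).
    pose proof (pm_sym (U k (N k)) (U k n)). unabs. lra. }
  assert (A : forall k l, Rabs (p (v k) (v l) - L (U k) (U l)) <= 2 * / (INR k + 1) + 2 * / (INR l + 1)).
  { intros k l.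
    assert (p (v k) (v l) <= L (U k) (U l) + (2 * / (INR k + 1) + 2 * / (INR l + 1))).
    { apply (lim_le2 (fun _ => p (v k) (v l)) (fun n => p (U k n) (U l n))).
      - apply cv_const.
      - apply L_spec; auto.
      - exists (max (N k) (N l)). intros n Hn.
        destruct (B1 k n ltac:(lia)). destruct (B1 l n ltac:(lia)).
        pose proof (pm_p4 (v k) (U k n) (v l)). pose proof (pm_p4 (U k n) (U l n) (v l)).
        pose proof (pm_sym (v l) (U l n)). lra. }
    assert (L (U k) (U l) <= p (v k) (v l) + (2 * / (INR k + 1) + 2 * / (INR l + 1))).
    { apply (lim_le2 (fun n => p (U k n) (U l n)) (fun _ => p (v k) (v l))).
      - apply L_spec; auto.
      - apply cv_const.
      - exists (max (N k) (N l)). intros n Hn.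
        destruct (B1 k n ltac:(lia)). destruct (B1 l n ltac:(lia)).
        pose proof (pm_p4 (U k n) (v k) (U l n)). pose proof (pm_p4 (v k) (v l) (U l n)).
        pose proof (pm_sym (v l) (U l n)). lra. }
    unabs; lra. }
  assert (Hv : forall eps, 0 < eps -> exists K : nat, forall k l, (K <= k)%nat -> (K <= l)%nat ->
      Rabs (p (v k) (v l) - a) < eps).
  { intros eps He. destruct (small_d (eps/8)) as [K1 HK1]; [lra|].
    destruct (Ha (eps/2)) as [K2 HK2]; [lra|]. exists (max K1 K2). intros k l Hk Hl.
    pose proof (A k l). pose proof (HK1 k ltac:(lia)). pose proof (HK1 l ltac:(lia)).
    pose proof (HK2 k l ltac:(lia) ltac:(lia)). unabs; lra. }
  assert (Cv : Cau v) by (exists a; exact Hv).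
  exists v. split; [exact Cv|]. split; [apply L_self; exact Hv|].
  intros eps He. destruct (small_d (eps/8)) as [K1 HK1]; [lra|].
  destruct (Hv (eps/4)) as [K2 HK2]; [lra|].
  exists (max K1 K2). intros k Hk. unfold Rdist, R_dist.
  assert (Rabs (L v (U k) - a) <= eps/2); [|lra].
  apply (lim_close _ _ _ _ (L_spec v (U k) Cv (HU k))).
  exists (max (N k) K2). intros n Hn.
  destruct (B1 k n ltac:(lia)). pose proof (HK1 k ltac:(lia)).
  pose proof (HK2 n k ltac:(lia) ltac:(lia)).
  pose proof (pm_p4 (v n) (v k) (U k n)). pose proof (pm_p4 (v n) (U k n) (v k)).
  pose proof (pm_sym (v k) (U k n)). unabs; lra.
Qed.

Lemma pY_complete : p_Cauchy_complete pY.
Proof.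
  intros S [a Ha].
  destruct (diag (fun k => rep (S k)) a (fun k => rep_Cau (S k)) Ha) as (v & Cv & Lv & Hc).
  exists (mk v Cv). split.
  - rewrite pY_mk_l, L_rep_mk, Lv by exact Cv.
    apply (cv_ev (fun k => L v (rep (S k)))); [|exact Hc].
    exists 0%nat. intros. rewrite pY_mk_l. reflexivity.
  - rewrite pY_mk_l, L_rep_mk, Lv by exact Cv.
    intros e He. destruct (Ha e He) as [N HN]. exists N. intros n Hn. apply HN; lia.
Qed.

Lemma no_dup (y : Y) x0 : (forall x, pY y (iX x) = p x0 x + 1) -> pY y y = p x0 x0 + 1 -> False.
Proof.
  intros H Hyy. pose proof (rep_Cau y) as Cu. destruct Cu as [a Ha].
  assert (Cu : Cau (rep y)) by apply rep_Cau.
  assert (Ea : a = p x0 x0 + 1). { unfold pY in Hyy. rewrite (L_self _ _ Ha) in Hyy. exact Hyy. }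
  destruct (Ha (1/4)) as [N HN]; [lra|].
  pose proof (L_spec (rep y) (fun _ => x0) Cu (Cau_const x0)) as S0.
  rewrite <- pY_iX, H in S0.
  destruct (S0 (1/4)) as [M HM]; [lra|].
  set (m := max N M).
  specialize (HM m ltac:(unfold m; lia)). unfold Rdist, R_dist in HM.
  assert (Rabs (L (rep y) (fun _ => rep y m) - a) <= 1/4).
  { apply (lim_close _ _ _ _ (L_spec _ _ Cu (Cau_const _))). exists N. intros n Hn.
    left. apply HN; unfold m; lia. }
  rewrite <- pY_iX, H in H0. pose proof (pm_sym x0 (rep y m)). unabs. lra.
Qed.

End Compl.

Section Ext.
Context {T : Type} (q : T -> T -> R) (c : T).

Definition qe (a b : option T) : R :=
  match a, b with
  | Some x, Some y => q x y
  | None, Some y => q c y + 1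
  | Some x, None => q x c + 1
  | None, None => q c c + 1
  end.

Lemma qe_pm : is_partial_metric q -> is_partial_metric qe.
Proof.
  intros (H0&H1&H2&H3&H4). repeat split.
  - intros [x|] [y|]; simpl; try pose proof (H0 x y); try pose proof (H0 c y);
      try pose proof (H0 x c); try pose proof (H0 c c); lra.
  - intros [x|] [y|]; simpl; intros E1 E2.
    + f_equal. apply H1; auto.
    + pose proof (H2 x c). pose proof (H3 x c). lra.
    + pose proof (H2 y c). pose proof (H3 y c). lra.
    + reflexivity.
  - intros [x|] [y|]; simpl.
    + apply H2.
    + pose proof (H2 x c); lra.
    + pose proof (H2 c y); lra.
    + lra.
  - intros [x|] [y|]; simpl; try rewrite H3; auto.
  - intros [x|] [y|] [z|]; simpl.
    + apply H4.
    + pose proof (H4 x y c). lra.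
    + pose proof (H4 x c z). lra.
    + pose proof (H3 x c). lra.
    + pose proof (H4 c y z). lra.
    + pose proof (H4 c y c). pose proof (H3 c y). lra.
    + lra.
    + lra.
Qed.

Lemma qe_complete : p_Cauchy_complete q -> p_Cauchy_complete qe.
Proof.
  intros Hc w [a Ha].
  destruct (classic (exists N, forall n, (N <= n)%nat -> w n <> None)) as [[N HN]|HN].
  - pose (u := fun n => match w n with Some y => y | None => c end).
    assert (Hu : forall n, (N <= n)%nat -> w n = Some (u n)).
    { intros n Hn. unfold u. specialize (HN n Hn). destruct (w n); congruence. }
    assert (Cu : p_Cauchy q u).
    { exists a. intros e He. destruct (Ha e He) as [N' HN']. exists (max N N').
      intros n m Hn Hm. specialize (HN' n m ltac:(lia) ltac:(lia)).
      rewrite (Hu n), (Hu m) in HN' by lia. exact HN'. }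
    destruct (Hc u Cu) as [y [Y1 Y2]]. exists (Some y). split; simpl.
    + apply (cv_ev (fun n => q y (u n))); auto. exists N. intros n Hn. rewrite (Hu n Hn). reflexivity.
    + apply (cv_ev (fun n => q (u n) (u n))); auto. exists N. intros n Hn. rewrite (Hu n Hn). reflexivity.
  - assert (HN' : forall N, exists n, (N <= n)%nat /\ w n = None).
    { intros N. apply NNPP. intros Hc'. apply HN. exists N. intros n Hn E. apply Hc'. eauto. }
    assert (Ea : qe None None = a).
    { apply eq_of_close. intros e He. destruct (Ha e He) as [N HN0].
      destruct (HN' N) as [n [Hn E]]. specialize (HN0 n n Hn Hn). rewrite E in HN0. exact HN0. }
    exists None. split.
    + rewrite Ea. intros e He. destruct (Ha e He) as [N HN0].
      destruct (HN' N) as [m [Hm E]]. exists N. intros n Hn.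
      specialize (HN0 m n Hm Hn). rewrite E in HN0. exact HN0.
    + rewrite Ea. intros e He. destruct (Ha e He) as [N HN0]. exists N. intros n Hn.
      apply HN0; lia.
Qed.

Lemma qe_dense {X' : Type} (i : X' -> T) x0 :
  pdense q (fun y => exists x, i x = y) -> i x0 = c -> pdense qe (fun z => exists x, Some (i x) = z).
Proof.
  intros Hd Hc z eps He. destruct z as [y|].
  - destruct (Hd y eps He) as [y' [[x Hx] Hb]]. exists (Some y'). split.
    + exists x. congruence.
    + exact Hb.
  - exists (Some c). split; [exists x0; congruence|]. unfold pball; simpl; lra.
Qed.

Lemma qe_iso {X' : Type} (p' : X' -> X' -> R) (i : X' -> T) :
  isometry p' q i -> isometry p' qe (fun x => Some (i x)).
Proof. intros H x y. simpl. apply H. Qed.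

End Ext.

Theorem corollary1p5 (X : Type) (p : X -> X -> R) :
  is_partial_metric p -> inhabited X ->
  exists (Y : Type) (pY : Y -> Y -> R) (i : X -> Y)
         (Z : Type) (pZ : Z -> Z -> R) (j : X -> Z),
    is_pCauchy_completion p pY i /\ is_pCauchy_completion p pZ j /\
    ~ (exists g : Y -> Z,
         bijective_map g /\ isometry pY pZ g /\ forall x, g (i x) = j x).
Proof.
  intros Hp [x0].
  exists (Y p), (pY p), (iX p), (option (Y p)), (qe (pY p) (iX p x0)), (fun x => Some (iX p x)).
  split; [|split].
  - split; [apply pY_pm; auto|]. split; [apply pY_complete; auto|].
    split; [apply iX_iso; auto|apply iX_dense; auto].
  - split; [apply qe_pm, pY_pm; auto|]. split; [apply qe_complete, pY_complete; auto|].
    split; [apply qe_iso, iX_iso; auto|]. apply (qe_dense _ _ _ x0); auto. apply iX_dense; auto.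
  - intros [g [[ginj gsurj] [giso gi]]]. destruct (gsurj None) as [y Hy].
    apply (no_dup p Hp y x0).
    + intros x. rewrite <- giso, Hy, gi. simpl. rewrite (iX_iso p Hp). reflexivity.
    + rewrite <- giso, Hy. simpl. rewrite (iX_iso p Hp). reflexivity.
Qed.
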